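(* Let $[N]=\{1,\dots,N\}$ be a set of arms, $H\ge 1$ a horizon, and let $\tau$ be a trajectory specifying, for every time step $h\in[H]$ and arm $i\in[N]$, a state $s_h^{i}$ and a binary action $a_h^{i}\in\{0,1\}$. For each $h\in[H]$ let $f_{\text{source}}(h)\subseteq[N]$ and $f_{\text{target}}(h)\subseteq[N]$ be given sets of arms (they may be determined by static features of the arms and by the states and actions recorded in $\tau$). Consider the following randomized procedure (the ''Convert Aggregate Behavior to Trajectory'' algorithm). For $h=1,2,\dots,H$: set $C_{A,h}=\{c\in f_{\text{source}}(h): a_h^{c}=1\}$ and $C_{B,h}=\{c\in f_{\text{target}}(h): a_h^{c}=0\}$; then, iterating over the elements $c_B\in C_{B,h}$ in a fixed order, if $C_{A,h}\neq\varnothing$, choose $c_A$ uniformly at random from the current $C_{A,h}$, set $a_h^{c_B}=1$ and $a_h^{c_A}=0$, and remove $c_A$ from $C_{A,h}$. All random choices are made independently. The procedure returns the modified trajectory. Then this procedure allocates actions with maximum entropy: any two trajectories that the procedure outputs with positive probability are output with equal probability, i.e. the output is uniformly distributed over its support (equivalently, the output distribution has maximum Shannon entropy among all distributions on that support).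
   Context: An RMAB has $N$ arms; at each time step each arm is in a state and receives action $1$ (intervene/pull) or $0$ (no intervention). A trajectory records the joint states and joint actions of all arms over time steps $1,\dots,H$. The procedure only changes actions, never states. *)

(* Defs.v *)
From mathcomp Require Import all_boot all_order all_algebra.
Set Implicit Arguments. Unset Strict Implicit. Unset Printing Implicit Defensive.
Import Order.TTheory GRing.Theory Num.Theory.
Local Open Scope ring_scope.

(* A finitely supported distribution: list of (weight, outcome). *)
Definition dist (T : Type) := seq (rat * T).

Definition dret {T : Type} (x : T) : dist T := [:: (1, x)].

Definition dbind {T U : Type} (d : dist T) (f : T -> dist U) : dist U :=
  flatten [seq [seq (p.1 * q.1, q.2) | q <- f p.2] | p <- d].

(* uniform choice from a (nonempty, duplicate-free) list *)
Definition duniform {T : Type} (s : seq T) : dist T :=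
  [seq ((size s)%:R^-1, x) | x <- s].

Definition prob {T : eqType} (d : dist T) (x : T) : rat :=
  \sum_(p <- d | p.2 == x) p.1.

(* Trajectory over arms 'I_N and time steps 'I_H (step h in the paper is
   index h-1 here): states s_h^i and binary actions a_h^i. *)
Definition traj (S : eqType) (N H : nat) : Type :=
  ({ffun 'I_H -> {ffun 'I_N -> S}} * {ffun 'I_H -> {ffun 'I_N -> bool}})%type.

Definition swap_act N (a : {ffun 'I_N -> bool}) (cB cA : 'I_N) :
  {ffun 'I_N -> bool} :=
  [ffun j => if j == cB then true else if j == cA then false else a j].

(* inner loop over the elements c_B of C_{B,h}, in the order given by CB,
   with the current pool CA of candidates c_A *)
Fixpoint inner_loop N (CA CB : seq 'I_N) (a : {ffun 'I_N -> bool}) :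
  dist {ffun 'I_N -> bool} :=
  match CB with
  | [::] => dret a
  | cB :: CB' =>
      if CA is [::] then inner_loop CA CB' a
      else dbind (duniform CA)
             (fun cA => inner_loop (rem cA CA) CB' (swap_act a cB cA))
  end.

Definition C_A N (fsrc : {set 'I_N}) (a : {ffun 'I_N -> bool}) : {set 'I_N} :=
  [set c in fsrc | a c].
Definition C_B N (ftgt : {set 'I_N}) (a : {ffun 'I_N -> bool}) : {set 'I_N} :=
  [set c in ftgt | ~~ a c].

(* one step h of the outer loop; ordB h is the fixed order in which the
   elements of C_{B,h} are iterated *)
Definition cabt_step (S : eqType) N H
  (fsrc ftgt : 'I_H -> {set 'I_N}) (ordB : 'I_H -> seq 'I_N)
  (h : 'I_H) (t : traj S N H) : dist (traj S N H) :=
  let a := t.2 h in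
  dbind (inner_loop (enum (C_A (fsrc h) a)) (ordB h) a)
    (fun a' => dret (t.1, [ffun h' => if h' == h then a' else t.2 h'])).

Fixpoint cabt_from (S : eqType) N H
  (fsrc ftgt : 'I_H -> {set 'I_N}) (ordB : 'I_H -> seq 'I_N)
  (hs : seq 'I_H) (t : traj S N H) : dist (traj S N H) :=
  match hs with
  | [::] => dret t
  | h :: hs' => dbind (cabt_step fsrc ftgt ordB h t)
                      (cabt_from fsrc ftgt ordB hs')
  end.

Definition cabt (S : eqType) N H
  (fsrc ftgt : 'I_H -> {set 'I_N}) (ordB : 'I_H -> seq 'I_N)
  (t : traj S N H) : dist (traj S N H) :=
  cabt_from fsrc ftgt ordB (enum 'I_H) t.

(* Main.v *)
Require Import Defs.
From mathcomp Require Import all_boot all_order all_algebra.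
Set Implicit Arguments. Unset Strict Implicit. Unset Printing Implicit Defensive.
Import Order.TTheory GRing.Theory Num.Theory.
Local Open Scope ring_scope.

Fixpoint cst (m n : nat) : rat :=
  match m, n with
  | m'.+1, n'.+1 => (minn m n)%:R / m%:R * cst m' n'
  | _, _ => 1
  end.

Definition Pin N (CA CB : seq 'I_N) (a y : {ffun 'I_N -> bool}) : bool :=
  let k := minn (size CA) (size CB) in
  [&& all y (take k CB),
      [forall j, (j \notin CA) ==> (j \notin take k CB) ==> (y j == a j)]
    & count (fun j => ~~ y j) CA == k].

Section Inner.
Variables (N : nat) (CA CB' : seq 'I_N) (cB c : 'I_N) (a : {ffun 'I_N -> bool}).
Hypotheses (uA : uniq CA) (uB : uniq (cB :: CB')) (aA : all a CA)
  (aB : all (predC a) (cB :: CB')) (cA : c \in CA).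

Let cBnA : cB \notin CA.
Proof.
apply/negP => H; move: (allP aA _ H) (allP aB cB (mem_head _ _)) => /= ->; done.
Qed.

Let cnB : c \notin cB :: CB'.
Proof.
apply/negP => H; move: (allP aB _ H) (allP aA c cA) => /= /negbTE ->; done.
Qed.

Lemma swap_inv : all (swap_act a cB c) (rem c CA) /\
                 all (predC (swap_act a cB c)) CB'.
Proof.
split; apply/allP => j Hj; rewrite /= ffunE.
  move: Hj; rewrite mem_rem_uniq // inE => /andP[/negbTE -> jA].
  have -> : (j == cB) = false by apply/negbTE/negP => /eqP E; move: cBnA; rewrite -E jA.
  exact: (allP aA).
have -> : (j == cB) = false.
  by apply/negbTE/negP => /eqP E; move: uB; rewrite /= -E Hj.
have -> : (j == c) = false.
  by apply/negbTE/negP => /eqP E; move: cnB; rewrite -E inE Hj orbT.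
by apply: (allP aB); rewrite inE Hj orbT.
Qed.

Lemma Pin_step y :
  Pin (rem c CA) CB' (swap_act a cB c) y = Pin CA (cB :: CB') a y && ~~ y c.
Proof.
have [m Hm] : exists m, size CA = m.+1.
  by case: (CA) cA => // x s _; exists (size s).
have sz : size (rem c CA) = m by rewrite size_rem // Hm.
rewrite /Pin sz Hm /= minnSS /=.
set T' := take _ CB'.
have nT : forall j, j \notin CB' -> j \notin T'.
  by move=> j; apply: contra; apply: mem_take.
have cnB' : c \notin CB' by move: cnB; rewrite inE negb_or => /andP[].
have cBnB' : cB \notin CB' by case/andP: uB.
have cnt : count (fun j => ~~ y j) CA = (~~ y c + count (fun j => ~~ y j) (rem c CA))%N.
  by rewrite (permP (perm_to_rem cA)).
have cnr : c \notin rem c CA by rewrite mem_rem_uniq // inE eqxx.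
have cBnr : cB \notin rem c CA by rewrite mem_rem_uniq // inE (negbTE cBnA) andbF.
have cneB : (c == cB) = false.
  by apply/negbTE/negP => /eqP E; move: cnB; rewrite E mem_head.
apply/idP/idP.
  case/and3P => HT /forallP Hf /eqP Hc.
  have yc : ~~ y c.
    by move: (Hf c); rewrite cnr nT //= ffunE eqxx cneB => /eqP ->.
  have ycB : y cB.
    by move: (Hf cB); rewrite cBnr nT //= ffunE eqxx => /eqP ->.
  rewrite yc ycB HT cnt Hc yc /= eqxx !andbT /=.
  apply/forallP => j; apply/implyP => jA; apply/implyP.
  rewrite inE negb_or => /andP[jB jT].
  have jr : j \notin rem c CA by rewrite mem_rem_uniq // inE negb_and jA orbT.
  move: (Hf j); rewrite jr jT /= ffunE (negbTE jB).
  have -> : (j == c) = false by apply/negbTE/negP => /eqP E; move: jA; rewrite E cA.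
  done.
case/andP => /and3P[/andP[ycB HT] /forallP Hf /eqP Hc] yc.
rewrite HT /=; apply/andP; split.
  apply/forallP => j; apply/implyP => jr; apply/implyP => jT; rewrite ffunE.
  case: (j =P cB) => [->|jB]; first by rewrite ycB.
  case: (j =P c) => [->|jc]; first by rewrite (negbTE yc).
  move: (Hf j); rewrite inE negb_or jT.
  have -> : j \notin CA.
    by apply/negP => jA; move: jr; rewrite mem_rem_uniq // inE jA andbT; apply/negP/negPn/eqP.
  by have -> : j != cB by apply/eqP.
by move: Hc; rewrite cnt yc add1n => -[->].
Qed.

End Inner.

Lemma prob_dbind (T : Type) (U : eqType) (d : dist T) (f : T -> dist U) y :
  prob (dbind d f) y = \sum_(p <- d) p.1 * prob (f p.2) y.
Proof.
elim: d => [|p d IH]; first by rewrite /prob /dbind /= !big_nil.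
move: IH; rewrite /prob /dbind /= big_cat big_cons /= => ->.
by rewrite big_map mulr_sumr.
Qed.

Lemma prob_dret (U : eqType) (x y : U) : prob (dret x) y = (x == y)%:R.
Proof. by rewrite /prob /dret big_cons big_nil /=; case: (x == y); rewrite ?addr0. Qed.

Lemma sum_if_count (T : Type) (s : seq T) (P : pred T) (K : rat) :
  \sum_(c <- s) (if P c then K else 0) = (count P s)%:R * K.
Proof.
elim: s => [|x s IH]; first by rewrite big_nil mul0r.
by rewrite big_cons IH /= natrD mulrDl; case: (P x); rewrite ?mul1r ?mul0r ?add0r.
Qed.

Lemma inner_cons N (CA CB' : seq 'I_N) cB a : CA != [::] ->
  inner_loop CA (cB :: CB') a =
  dbind (duniform CA) (fun cA => inner_loop (rem cA CA) CB' (swap_act a cB cA)).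
Proof. by case: CA. Qed.

Lemma inner_prob N (CB : seq 'I_N) : forall (CA : seq 'I_N) (a : {ffun 'I_N -> bool}), uniq CA -> uniq CB ->
  all a CA -> all (predC a) CB -> forall y,
  prob (inner_loop CA CB a) y = if Pin CA CB a y then cst (size CA) (size CB) else 0.
Proof.
elim: CB => [|cB CB' IH] CA a uA uB aA aB y.
  rewrite /= prob_dret /Pin /= minn0 /=.
  have -> : cst (size CA) 0 = 1 by case: (size CA).
  have E : (a == y) = [forall j, (j \notin CA) ==> true ==> (y j == a j)] &&
                      (count (fun j => ~~ y j) CA == 0%N).
    apply/eqP/andP.
      move=> <-; split; first by apply/forallP => j; rewrite eqxx !implybT.
      by rewrite eqn0Ngt -has_count; apply/hasPn => j /(allP aA) ->.
    case => /forallP Hf Hc; apply/ffunP => j.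
    case: (boolP (j \in CA)) => jA.
      move: Hc; rewrite eqn0Ngt -has_count => /hasPn /(_ j jA) /negPn ->.
      by rewrite (allP aA j jA).
    by move: (Hf j); rewrite jA /= => /eqP ->.
  by rewrite -E; case: (a == y).
have uB' : uniq CB' by case/andP: uB.
have aB' : all (predC a) CB' by case/andP: aB.
case: (altP (CA =P [::])) => [->|ne].
  rewrite /= IH //= /Pin /= !min0n. by rewrite !take0.
rewrite inner_cons // prob_dbind /duniform big_map.
have [m Hm] : exists m, size CA = m.+1.
  by case: (CA) ne => // x s _; exists (size s).
rewrite (eq_big_seq (fun c => (size CA)%:R^-1 *
   (if Pin CA (cB :: CB') a y && ~~ y c then cst m (size CB') else 0))); last first.
  move=> c cA /=; have [i1 i2] := swap_inv uA uB aA aB cA.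
  by rewrite IH ?rem_uniq // size_rem // Hm Pin_step.
rewrite -mulr_sumr.
case HP : (Pin CA (cB :: CB') a y) => /=; last by rewrite big1 ?mulr0.
rewrite sum_if_count.
move: HP; rewrite /Pin => /and3P[_ _ /eqP ->].
rewrite Hm /= mulrA [_^-1 * _]mulrC.
by [].
Qed.
Lemma prob_supp (U : eqType) (d : dist U) y : prob d y != 0 -> y \in map snd d.
Proof.
apply: contraR => Hy; rewrite /prob big1_seq // => p /andP[/eqP Hp Hpd].
by move: Hy; rewrite -Hp map_f.
Qed.

Lemma supp_dbind (T : eqType) (U : eqType) (d : dist T) (f : T -> dist U) y :
  y \in map snd (dbind d f) -> exists2 p, p \in d & y \in map snd (f p.2).
Proof.
elim: d => [|p d IH] //=.
rewrite /dbind /= map_cat mem_cat -map_comp /= => /orP[Hy|Hy].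
  by exists p; rewrite ?mem_head //; move: Hy; rewrite (@eq_map _ _ _ snd).
have [q Hq Hyq] := IH Hy; exists q => //; by rewrite in_cons Hq orbT.
Qed.

Lemma bind_unif (T U : eqType) (d : dist T) (f : T -> dist U) c c' :
 (forall x, prob d x = 0 \/ prob d x = c) ->
 (forall x, x \in map snd d -> forall y, prob (f x) y = 0 \/ prob (f x) y = c') ->
 (forall x1 x2 y, x1 \in map snd d -> x2 \in map snd d ->
     prob (f x1) y != 0 -> prob (f x2) y != 0 -> x1 = x2) ->
 forall y, prob (dbind d f) y = 0 \/ prob (dbind d f) y = c * c'.
Proof.
move=> Hd Hf Hinj y; rewrite prob_dbind.
have [/hasP[x0 Hx0 Hnz]|/hasPn Hn] := boolP (has (fun x => prob (f x) y != 0) (map snd d)).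
  have -> : \sum_(p <- d) p.1 * prob (f p.2) y = prob d x0 * prob (f x0) y.
    rewrite [prob d x0]/prob mulr_suml [RHS]big_mkcond /=.
    apply: eq_big_seq => p Hp; case: eqP => [->//|Hne].
    have Hp2 : p.2 \in map snd d by apply: map_f.
    case: (boolP (prob (f p.2) y != 0)) => [Hz|]; last by move/negPn/eqP->; rewrite mulr0.
    by case: Hne; apply: (Hinj _ _ y).
  by case: (Hd x0) => ->; [left; rewrite mul0r | case: (Hf x0 Hx0 y) => ->; [left; rewrite mulr0|right]].
left; apply: big1_seq => p /andP[_ Hp].
by move: (Hn p.2 (map_f _ Hp)) => /negPn/eqP ->; rewrite mulr0.
Qed.

Section Outer.
Variables (S : eqType) (N H : nat) (fsrc ftgt : 'I_H -> {set 'I_N})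
  (ordB : 'I_H -> seq 'I_N).

Definition kstep (h : 'I_H) (a : {ffun 'I_N -> bool}) :=
  cst (size (enum (C_A (fsrc h) a))) (size (ordB h)).

Lemma step_unif h (t : traj S N H) : uniq (ordB h) -> all (predC (t.2 h)) (ordB h) ->
  forall y, prob (cabt_step fsrc ftgt ordB h t) y = 0 \/
            prob (cabt_step fsrc ftgt ordB h t) y = kstep h (t.2 h).
Proof.
move=> uo ao y; rewrite -[kstep _ _]mulr1 /cabt_step; apply: bind_unif.
- move=> x; rewrite inner_prob ?enum_uniq //; first by case: ifP; auto.
  by apply/allP => j; rewrite mem_enum /C_A inE => /andP[].
- by move=> x _ y'; rewrite prob_dret; case: (_ == _); auto.
- move=> x1 x2 y' _ _; rewrite !prob_dret.
  case E1: (_ == y'); case E2: (_ == y') => //= _ _.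
  move/eqP: E1 => E1; move/eqP: E2 => E2.
  by move: E1; rewrite -E2 => /(congr1 (fun t : traj S N H => t.2 h)); rewrite !ffunE eqxx.
Qed.

Lemma step_supp h (t x : traj S N H) : x \in map snd (cabt_step fsrc ftgt ordB h t) ->
  x.1 = t.1 /\ forall h', h' != h -> x.2 h' = t.2 h'.
Proof.
case/supp_dbind => p _; rewrite /= inE => /eqP ->; split => // h' nh.
by rewrite ffunE (negbTE nh).
Qed.

Fixpoint Kf (hs : seq 'I_H) (t : traj S N H) : rat :=
  match hs with [::] => 1 | h :: hs' => kstep h (t.2 h) * Kf hs' t end.

Lemma Kf_eq hs (t1 t2 : traj S N H) : (forall h, h \in hs -> t1.2 h = t2.2 h) -> Kf hs t1 = Kf hs t2.
Proof.
elim: hs => [|h hs IH] //= E.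
by rewrite E ?mem_head // IH // => h' H'; apply: E; rewrite inE H' orbT.
Qed.

Lemma from_supp hs (t y : traj S N H) : y \in map snd (cabt_from fsrc ftgt ordB hs t) ->
  y.1 = t.1 /\ forall h, h \notin hs -> y.2 h = t.2 h.
Proof.
elim: hs t => [|h hs IH] t /=; first by rewrite inE => /eqP ->.
case/supp_dbind => p Hp /IH [E1 E2]; have [F1 F2] := step_supp (map_f snd Hp).
split; first by rewrite E1 F1.
by move=> h'; rewrite inE negb_or => /andP[nh nhs]; rewrite E2 // F2.
Qed.

Lemma from_unif hs : uniq hs -> forall t : traj S N H,
  (forall h, h \in hs -> uniq (ordB h) /\ all (predC (t.2 h)) (ordB h)) ->
  forall y, prob (cabt_from fsrc ftgt ordB hs t) y = 0 \/
            prob (cabt_from fsrc ftgt ordB hs t) y = Kf hs t.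
Proof.
elim: hs => [|h hs IH] /= uh t Hh y.
  by rewrite prob_dret; case: (_ == _); auto.
case/andP: uh => nh uh.
have [u1 a1] := Hh h (mem_head _ _).
apply: bind_unif.
- exact: step_unif.
- move=> x Hx y'; have [F1 F2] := step_supp Hx.
  have nhh : forall h', h' \in hs -> h' != h.
    by move=> h' H'; apply/eqP => E; move: nh; rewrite -E H'.
  rewrite (@Kf_eq hs t x); last by move=> h' H'; rewrite F2 // nhh.
  apply: IH => // h' H'; rewrite F2 ?nhh //; apply: Hh; by rewrite inE H' orbT.
- move=> x1 x2 y' H1 H2 /prob_supp/from_supp [E1 E2] /prob_supp/from_supp [G1 G2].
  have [F1 F2] := step_supp H1; have [K1 K2] := step_supp H2.
  rewrite [x1]surjective_pairing [x2]surjective_pairing; congr pair.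
    by rewrite -E1 G1.
  apply/ffunP => h'; case: (h' =P h) => [->|/eqP ne].
    by rewrite -(E2 h nh) -(G2 h nh).
  by rewrite F2 // K2.
Qed.

End Outer.

Theorem theorem1 (S : eqType) (N H : nat) (hH : (0 < H)%N)
  (tau : traj S N H) (fsrc ftgt : 'I_H -> {set 'I_N})
  (ordB : 'I_H -> seq 'I_N)
  (hord : forall h : 'I_H, perm_eq (ordB h) (enum (C_B (ftgt h) (tau.2 h))))
  (t1 t2 : traj S N H) :
  0 < prob (cabt fsrc ftgt ordB tau) t1 ->
  0 < prob (cabt fsrc ftgt ordB tau) t2 ->
  prob (cabt fsrc ftgt ordB tau) t1 = prob (cabt fsrc ftgt ordB tau) t2.
Proof.
have U := @from_unif S N H fsrc ftgt ordB (enum 'I_H) (enum_uniq _) tau.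
have Hh : forall h, h \in enum 'I_H ->
    uniq (ordB h) /\ all (predC (tau.2 h)) (ordB h).
  move=> h _; split; first by rewrite (perm_uniq (hord h)) enum_uniq.
  by apply/allP => j; rewrite (perm_mem (hord h)) mem_enum /C_B inE => /andP[].
rewrite /cabt.
case: (U Hh t1) => ->; first by rewrite ltxx.
by case: (U Hh t2) => ->; first by rewrite ltxx.
Qed.
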